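(* Let $S$ be a numerical semigroup with $g=\mathrm{g}(S)\ge1$ and $a=\mathrm{m}(S)$, where $a\in\{2,\dots,g+1\}$ and $a\nmid g$. Let $r\in\{1,\dots,a-1\}$ satisfy $r\equiv g\pmod a$. Then $S$ is reflective if and only if \[ \mathrm{Ap}(S;a)=\{0,\ 2g+a-r\}\cup\big(\{g+1,\dots,g+a-1\}\setminus\{g+a-r\}\big). \]
   Context: A numerical semigroup is a submonoid $S$ of $(\mathbb{N}_0,+)$ with finite complement. Its genus $\mathrm{g}(S)$ is the number of elements of $\mathbb{N}_0\setminus S$, and its multiplicity $\mathrm{m}(S)$ is the smallest positive element of $S$. For $0\ne t\in S$, the Apéry set of $S$ relative to $t$ is $\mathrm{Ap}(S;t)=\{s\in S: s-t\notin S\}$. A numerical semigroup $S$ of genus $g\ge1$ is called reflective if for every $z\in\{0,1,\dots,g-1\}$ exactly one of $z$ and $z+g$ belongs to $S$. *)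

(* Defs.v *)
From mathcomp Require Import all_boot.
Set Implicit Arguments. Unset Strict Implicit. Unset Printing Implicit Defensive.

Definition numerical_semigroup (S : pred nat) : Prop :=
  S 0 /\ (forall x y, S x -> S y -> S (x + y)) /\
  (exists N, forall n, N <= n -> S n).

(* g is the genus: the number of elements of N_0 \ S. Here N is any bound
   beyond which everything lies in S, so the count is the size of the gap set. *)
Definition genus_is (S : pred nat) (g : nat) : Prop :=
  exists N, (forall n, N <= n -> S n) /\ count (predC S) (iota 0 N) = g.

Definition multiplicity_is (S : pred nat) (m : nat) : Prop :=
  0 < m /\ S m /\ (forall k, 0 < k < m -> ~~ S k).

(* Apery set Ap(S;t) = { s in S : s - t not in S } (s - t is an integer;
   if s < t it is negative, hence not in S). *)
Definition apery (S : pred nat) (t : nat) (s : nat) : Prop :=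
  S s /\ ~ (t <= s /\ S (s - t)).

Definition reflective (S : pred nat) (g : nat) : Prop :=
  1 <= g /\ genus_is S g /\ (forall z, z < g -> (S z (+) S (z + g)) = true).

(* Main.v *)
Require Import Defs.
From mathcomp Require Import all_boot.
From mathcomp Require Import zify.

Lemma W a y c : 0 < a -> a %| y -> c * a < y + a -> y < c * a + a -> y = c * a.
Proof.
move=> a0 /dvdnP [m ->] h1 h2.
have e1 : c * a < m.+1 * a by rewrite mulSn; lia.
have e2 : m * a < c.+1 * a by rewrite mulSn; lia.
rewrite ltn_pmul2r // in e1; rewrite ltn_pmul2r // in e2.
have -> : m = c by lia.
by [].
Qed.

Lemma Wsmall a y : a %| y -> 0 < y -> y < a -> False.
Proof. move=> d y0 ya; have := dvdn_leq y0 d; lia. Qed.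

Lemma S_mul (S : pred nat) a : S 0 -> (forall x y, S x -> S y -> S (x + y)) -> S a ->
  forall k, S (k * a).
Proof. move=> h0 hadd ha; elim=> [|k IH] //; rewrite mulSn; exact: hadd. Qed.

Lemma ap_dec (S : pred nat) a : 0 < a -> forall x, S x ->
  exists k, k * a <= x /\ apery S a (x - k * a).
Proof.
move=> a0 x; elim: x {-2}x (leqnn x) => [|n IH] x hx Sx.
  exists 0; split=> //; rewrite mul0n subn0; split=> //; case=> h _; lia.
case: (boolP ((a <= x) && S (x - a))) => [/andP [ax Sxa]|hn].
  have [k [hk1 hk2]] := IH (x - a) ltac:(lia) Sxa.
  exists k.+1; split; first by rewrite mulSn; lia.
  have -> : x - k.+1 * a = x - a - k * a by rewrite mulSn; lia.
  exact: hk2.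
exists 0; split=> //; rewrite mul0n subn0; split=> //; case=> h1 h2.
by move: hn; rewrite h1 h2.
Qed.

Lemma fwd (S : pred nat) g a r q :
  S 0 -> (forall x y, S x -> S y -> S (x + y)) -> S a ->
  (forall k, 0 < k < a -> ~~ S k) -> 0 < a -> a <= g + 1 -> 1 <= g ->
  1 <= r <= a - 1 -> g = q * a + r ->
  (forall z, z < g -> (S z (+) S (z + g)) = true) ->
  (forall x, 2 * g <= x -> S x) ->
  forall x, apery S a x <->
      (x = 0 \/ x = 2 * g + a - r \/
       ((g + 1 <= x <= g + a - 1) /\ x <> g + a - r)).
Proof.
move=> S0 Sadd Sa Smul a0 ag g1 hr hg Hx F3.
have Sm := @S_mul S a S0 Sadd Sa.
have notS : forall u k, u < g -> ~~ S u -> u + k * a < g -> ~~ S (u + k * a).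
  move=> u k ug nu; elim: k => [|k IH]; first by rewrite mul0n addn0.
  rewrite mulSn => h.
  have h1 : ~~ S (u + k * a) by apply: IH; lia.
  have h2 : S (u + k * a + g) by have := Hx (u + k * a) ltac:(lia); rewrite (negbTE h1).
  have h3 : S (u + (a + k * a) + g).
    have -> : u + (a + k * a) + g = (u + k * a + g) + a by lia.
    exact: Sadd.
  by have := Hx (u + (a + k * a)) h; rewrite h3; case: (S _).
have F1 : forall z, z < g -> S z = (a %| z).
  move=> z zg; apply/idP/idP => [Sz|/dvdnP [k ->]]; last exact: Sm.
  rewrite /dvdn; apply/negPn/negP => hm.
  have i0 : 0 < z %% a by rewrite lt0n.
  have ia : z %% a < a by rewrite ltn_mod.
  have iz : z %% a <= z by rewrite leq_mod.
  have := notS (z %% a) (z %/ a) (leq_ltn_trans iz zg) (Smul (z %% a) ltac:(by rewrite i0 ia)).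
  rewrite addnC -divn_eq => /(_ zg); by rewrite Sz.
have F2 : forall z, z < g -> S (z + g) = ~~ (a %| z).
  move=> z zg; have := Hx z zg; rewrite F1 //; by case: (a %| z); case: (S _).
have Sqa : S (q * a) := Sm q.
have dqa : a %| q * a := dvdn_mull _ (dvdnn a).
move=> x; split.
- case=> Sx nSx.
  have [xg|xg] := ltnP x g.
    rewrite F1 // in Sx; left.
    have [ax|ax] := leqP a x.
      exfalso; apply: nSx; split=> //; rewrite F1; last by lia.
      by rewrite dvdn_sub.
    have := @W a _ 0 a0 Sx; lia.
  have [x2|x2] := ltnP x (2 * g).
    have ex : x = (x - g) + g by lia.
    rewrite ex F2 in Sx; last by lia.
    right; right.
    have [xa|xa] := leqP (g + a) x.
      exfalso; apply: nSx; split; first by lia.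
      have -> : x - a = (x - g - a) + g by lia.
      rewrite F2; last by lia.
      apply: contra Sx => d.
      have -> : x - g = (x - g - a) + a by lia.
      by rewrite dvdn_add.
    have xn : x <> g by move=> e; move: Sx; rewrite e subnn dvdn0.
    split; first by lia.
    move=> e; apply: nSx; split; first by lia.
    have -> : x - a = q * a by lia.
    exact: Sqa.
  have [xa|xa] := leqP (2 * g + a) x.
    by exfalso; apply: nSx; split; [lia| apply: F3; lia].
  have [xag|xag] := leqP g (x - a).
    have SS : S (x - a) = ~~ (a %| (x - a - g)).
      have E := F2 (x - a - g) ltac:(lia).
      by rewrite (_ : x - a - g + g = x - a) in E; last by lia.
    have d : a %| (x - a - g).
      apply/negPn/negP => nd; apply: nSx; split; first by lia.
      by rewrite SS.
    have := @W a _ q a0 d; lia.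
  right; right.
  have ea : a = g + 1 by lia.
  split; first by lia.
  move=> e; apply: nSx; split; first by lia.
  have -> : x - a = q * a by lia.
  exact: Sqa.
- case=> [->|[->|[hx hne]]].
  + split=> //; case; lia.
  + split; first by apply: F3; lia.
    case=> _; have -> : 2 * g + a - r - a = q * a + g by lia.
    by rewrite F2 ?dqa //; lia.
  + split.
      have [x2|x2] := ltnP x (2 * g); last exact: F3.
      have -> : x = (x - g) + g by lia.
      rewrite F2; last by lia.
      apply/negP => d; apply: (@Wsmall a _ d); lia.
    case=> ax; rewrite F1; last by lia.
    move=> d; have := @W a _ q a0 d; lia.
Qed.

Lemma bwd (S : pred nat) g a r q :
  S 0 -> (forall x y, S x -> S y -> S (x + y)) -> S a -> 0 < a ->
  ~~ (a %| g) -> 1 <= r <= a - 1 -> g = q * a + r ->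
  (forall x, apery S a x <->
      (x = 0 \/ x = 2 * g + a - r \/
       ((g + 1 <= x <= g + a - 1) /\ x <> g + a - r))) ->
  forall z, z < g -> (S z (+) S (z + g)) = true.
Proof.
move=> S0 Sadd Sa a0 ndg hr hg H.
have Sm := @S_mul S a S0 Sadd Sa.
have Sd : forall y, a %| y -> S y by move=> y /dvdnP [k ->].
have dec := @ap_dec S a a0.
have G1 : forall z, z < g -> S z -> a %| z.
  move=> z zg Sz; have [k [hk /H]] := dec z Sz.
  case=> [e|[e|[e _]]]; [|lia|lia].
  have -> : z = k * a by lia.
  exact: dvdn_mull.
move=> z zg.
case: (boolP (a %| z)) => dz.
  rewrite (Sd z dz) /=; apply/negP => Szg.
  have [k [hk /H]] := dec _ Szg.
  case=> [e|[e|[/andP [e1 e2] _]]].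
  - by move: ndg; rewrite -(dvdn_addr g dz) (_ : z + g = k * a) ?dvdn_mull //; lia.
  - lia.
  - have d : a %| (z - k * a) by rewrite dvdn_sub ?dvdn_mull.
    apply: (@Wsmall a _ d); lia.
have nSz : S z = false by apply/negP => Sz; move: dz; rewrite G1.
rewrite nSz /=.
case: (boolP (a %| (z + g))) => dzg; first exact: Sd.
have ed := divn_eq z a.
have m0 : 0 < z %% a by rewrite lt0n; exact: dz.
have ma : z %% a < a by rewrite ltn_mod.
move: ed m0 ma; move: (z %% a) (z %/ a) => m d ed m0 ma.
have Ay : apery S a (g + m).
  apply/H; right; right; split; first by apply/andP; split; lia.
  move=> e; apply: (negP dzg).
  have -> : z + g = (d + q + 1) * a.
    rewrite ed !mulnDl mul1n; lia.
  exact: dvdn_mull.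
have := Sadd _ _ Ay.1 (Sm d).
by rewrite (_ : g + m + d * a = z + g) //; lia.
Qed.

Lemma cnt (S : pred nat) g : genus_is S g ->
  (forall z, z < g -> (S z (+) S (z + g)) = true) -> forall x, 2 * g <= x -> S x.
Proof.
case=> N [HN Hc] Hx x x2.
have C2 : count (predC S) (iota 0 (2 * g)) = g.
  rewrite (_ : 2 * g = g + g) ?iotaD ?count_cat; last by lia.
  rewrite add0n -[in iota g g](addn0 g) iotaDl count_map.
  rewrite [count (preim _ _) _](@eq_in_count _ _ S); last first.
    move=> z; rewrite mem_iota add0n addn0 => /andP [_ zg] /=.
    by have := Hx z zg; rewrite [z + g]addnC; case: (S z); case: (S (g + z)).
  by rewrite addn0 addnC count_predC size_iota.
apply/negPn/negP => nSx.
pose M := maxn N x.+1.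
have e1 : count (predC S) (iota 0 M) = g.
  rewrite (_ : M = N + (M - N)); last by rewrite /M; lia.
  rewrite iotaD count_cat Hc add0n.
  rewrite (@eq_in_count _ _ pred0) ?count_pred0 ?addn0 //.
  by move=> y; rewrite mem_iota => /andP [hy _] /=; rewrite HN.
have e2 : 0 < count (predC S) (iota (2 * g) (M - 2 * g)).
  rewrite -has_count; apply/hasP; exists x => //.
  rewrite mem_iota; apply/andP; split=> //; rewrite /M; lia.
move: e1; rewrite (_ : M = 2 * g + (M - 2 * g)); last by rewrite /M; lia.
rewrite iotaD count_cat C2 add0n; lia.
Qed.

Theorem mainTheorem6 (S : pred nat) (g a r : nat) :
  numerical_semigroup S -> genus_is S g -> 1 <= g ->
  multiplicity_is S a -> 2 <= a <= g + 1 -> ~~ (a %| g) ->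
  1 <= r <= a - 1 -> r = g %[mod a] ->
  (reflective S g <->
   (forall x, apery S a x <->
      (x = 0 \/ x = 2 * g + a - r \/
       ((g + 1 <= x <= g + a - 1) /\ x <> g + a - r)))).
Proof.
move=> [S0 [Sadd _]] Hg g1 [a0 [Sa Smul]] ha ndg hr hmod.
have rg : r = g %% a by rewrite -hmod modn_small //; lia.
have hg : g = g %/ a * a + r by rewrite rg -divn_eq.
split.
- case=> _ [_ Hx].
  apply: (@fwd S g a r (g %/ a)) => //; try lia.
  exact: (@cnt S g Hg Hx).
- move=> H; split=> //; split=> //.
  exact: (@bwd S g a r (g %/ a)).
Qed.
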